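(* Let $W\in\mathbb{R}^{n\times m}$ with rows $w_1,\dots,w_n$, let $u\in\mathbb{R}^{1\times n}$, and let $a\le b$ be real numbers. Call a pair $(\Delta x,\Delta\sigma)\in\mathbb{R}^m\times\mathbb{R}^n$ admissible if $\Delta x\neq0$ and for every $i\in[n]$, $$\begin{pmatrix}w_i\Delta x\\ \Delta\sigma_i\end{pmatrix}^T\begin{pmatrix}-2ab& a+b\\ a+b&-2\end{pmatrix}\begin{pmatrix}w_i\Delta x\\ \Delta\sigma_i\end{pmatrix}\ge 0 .$$ Then $$\sup_{(\Delta x,\Delta\sigma)\ \text{admissible}}\frac{(u\Delta\sigma)^2}{\langle\Delta x,\Delta x\rangle}=\max_{y\in[a,b]^n}\big\|W^T\mathrm{diag}(y)u^T\big\|_2^2 .$$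
   Context: $\mathrm{diag}(y)$ is the diagonal matrix with diagonal $y$. The constraint on $(w_i\Delta x,\Delta\sigma_i)$ is equivalent to $(\Delta\sigma_i-a\,w_i\Delta x)(\Delta\sigma_i-b\,w_i\Delta x)\le0$, i.e. it encodes that the $i$-th activation has slope in $[a,b]$. *)

(* Defs.v *)
From HB Require Import structures.
From mathcomp Require Import all_boot all_order all_algebra.
From mathcomp Require Import all_classical all_reals.
Set Implicit Arguments. Unset Strict Implicit. Unset Printing Implicit Defensive.
Import Order.TTheory GRing.Theory Num.Theory.
Local Open Scope ring_scope.
Local Open Scope classical_set_scope.

Definition sectorQ (R : realType) (a b : R) : 'M[R]_2 :=
  \matrix_(i < 2, j < 2)
    (if (val i == 0%N) && (val j == 0%N) then - (2 * a * b)
     else if (val i == 1%N) && (val j == 1%N) then - 2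
     else a + b).

Definition pair2 (R : realType) (p q : R) : 'cV[R]_2 :=
  \col_(k < 2) (if val k == 0%N then p else q).

Definition admissible (R : realType) (n m : nat) (W : 'M[R]_(n, m)) (a b : R)
    (dx : 'cV[R]_m) (ds : 'cV[R]_n) : Prop :=
  dx != 0 /\
  forall i : 'I_n,
    let v := pair2 ((W *m dx) i 0) (ds i 0) in
    0 <= ((v^T *m sectorQ a b) *m v) 0 0.

Definition ratio_set (R : realType) (n m : nat) (W : 'M[R]_(n, m))
    (u : 'rV[R]_n) (a b : R) : set R :=
  [set r | exists dx ds, admissible W a b dx ds /\
           r = ((u *m ds) 0 0) ^+ 2 / (dx^T *m dx) 0 0].

Definition gain (R : realType) (n m : nat) (W : 'M[R]_(n, m))
    (u : 'rV[R]_n) (y : 'rV[R]_n) : R :=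
  let v := W^T *m diag_mx y *m u^T in (v^T *m v) 0 0.

Definition in_box (R : realType) (n : nat) (a b : R) (y : 'rV[R]_n) : Prop :=
  forall i : 'I_n, a <= y 0 i <= b.

(* Main.v *)
Require Import Defs.
From HB Require Import structures.
From mathcomp Require Import all_boot all_order all_algebra.
From mathcomp Require Import all_classical all_reals.
From mathcomp Require Import ring lra.
Import Order.TTheory GRing.Theory Num.Theory.
Local Open Scope ring_scope.
Set Implicit Arguments. Unset Strict Implicit.
Definition vv (R : realType) n m (W : 'M[R]_(n, m)) (u y : 'rV[R]_n) (j : 'I_m) : R :=
  \sum_i W i j * y 0 i * u 0 i.
Lemma vv_mx (R : realType) n m (W : 'M[R]_(n, m)) (u y : 'rV[R]_n) j :
  (W^T *m diag_mx y *m u^T) j 0 = vv W u y j.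
Proof. rewrite mul_mx_diag !mxE; apply: eq_bigr => i _; rewrite !mxE. by []. Qed.
Lemma gain_sum (R : realType) n m (W : 'M[R]_(n, m)) (u y : 'rV[R]_n) :
  gain W u y = \sum_j (vv W u y j)^+2.
Proof. rewrite /gain mxE; apply: eq_bigr => j _; rewrite mxE vv_mx expr2. by []. Qed.
Lemma dot_sum (R : realType) m (x : 'cV[R]_m) : (x^T *m x) 0 0 = \sum_j (x j 0)^+2.
Proof. rewrite mxE; apply: eq_bigr => j _; rewrite mxE expr2. by []. Qed.
Lemma CS (R : realType) m (v x : 'I_m -> R) :
  (\sum_j v j * x j)^+2 <= (\sum_j (v j)^+2) * (\sum_j (x j)^+2).
Proof.
set P := \sum_j v j * x j; set V := \sum_j (v j)^+2; set X := \sum_j (x j)^+2.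
have X0 : 0 <= X by apply: sumr_ge0 => j _; apply: sqr_ge0.
have H : 0 <= \sum_j (X * v j - P * x j)^+2 by apply: sumr_ge0 => j _; apply: sqr_ge0.
have E : \sum_j (X * v j - P * x j)^+2 = X * (X * V - P ^+ 2).
  have -> : \sum_j (X * v j - P * x j)^+2 = \sum_j (X^+2 * (v j)^+2 - 2 * X * P * (v j * x j) + P^+2 * (x j)^+2).
    by apply: eq_bigr => j _; ring.
  rewrite big_split big_split /= -!mulr_sumr /= sumrN -mulr_sumr -/P -/V -/X. ring.
rewrite E in H.
case: (ltrP 0 X) => hX.
  by rewrite -subr_ge0 mulrC; move: H; rewrite pmulr_rge0 // subr_ge0 mulrC.
have X00 : X = 0 by apply/eqP; rewrite eq_le hX X0.
have xj : forall j, x j = 0.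
  move=> j; apply/eqP; rewrite -sqrf_eq0; apply/eqP.
  exact: (psumr_eq0P (fun i _ => sqr_ge0 (x i)) X00).
have -> : P = 0 by rewrite /P big1 // => j _; rewrite xj mulr0.
by rewrite X00 expr0n /= mulr0.
Qed.
Lemma conv1 (R : realType) (a b t c d : R) : a <= t <= b ->
  (b - a) * (c + t * d)^+2 <= (b - t) * (c + a * d)^+2 + (t - a) * (c + b*d)^+2.
Proof. move=> /andP[h1 h2]. rewrite -subr_ge0.
have -> : (b - t) * (c + a * d)^+2 + (t - a) * (c + b*d)^+2 - (b - a) * (c + t * d)^+2
  = (b - a) * (t - a) * (b - t) * (d * d) by ring.
apply: mulr_ge0; last by rewrite -expr2 sqr_ge0.
apply: mulr_ge0; [apply: mulr_ge0|]; lra.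
Qed.
Lemma quad_pair2 (R : realType) (a b p q : R) :
  (((pair2 p q)^T *m sectorQ a b) *m pair2 p q) 0 0 = - 2 * (q - a * p) * (q - b * p).
Proof.
rewrite !mxE !big_ord_recl !big_ord0 !mxE /=.
rewrite !big_ord_recl !big_ord0 !mxE /=. ring.
Qed.
Definition upd (R : realType) n (y : 'rV[R]_n) (k : 'I_n) (t : R) : 'rV[R]_n :=
  \row_i (if i == k then t else y 0 i).
Lemma vv_upd (R : realType) n m (W : 'M[R]_(n, m)) (u y : 'rV[R]_n) k t j :
  vv W u (upd y k t) j = (\sum_(i | i != k) W i j * y 0 i * u 0 i) + t * (W k j * u 0 k).
Proof.
rewrite /vv (bigD1 k) //= addrC !mxE eqxx; congr (_ + _); last by ring.
by apply: eq_bigr => i /negbTE hi; rewrite !mxE hi.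
Qed.
Lemma step (R : realType) n m (W : 'M[R]_(n, m)) (u y : 'rV[R]_n) k (a b t : R) :
  a <= t <= b ->
  gain W u (upd y k t) <= gain W u (upd y k a) \/ gain W u (upd y k t) <= gain W u (upd y k b).
Proof.
move=> htab; have /andP[h1 h2] := htab.
rewrite !gain_sum.
set Gt := \sum_j _; set Ga := \sum_j _; set Gb := \sum_j _.
have H : (b - a) * Gt <= (b - t) * Ga + (t - a) * Gb.
  rewrite /Gt /Ga /Gb !mulr_sumr -big_split /=; apply: ler_sum => j _.
  rewrite !vv_upd; exact: conv1.
have G0 : 0 <= Gt by apply: sumr_ge0 => j _; apply: sqr_ge0.
case: (lerP b a) => hba.
  have eta : t = a by lra.
  by left; rewrite /Gt /Ga eta.
case: (lerP Ga Gb) => hg; [right|left]; nra.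
Qed.
Lemma upd_id (R : realType) n (y : 'rV[R]_n) k : upd y k (y 0 k) = y.
Proof. apply/rowP => i; rewrite !mxE; case: eqP => // ->; by []. Qed.
Lemma upd_box (R : realType) n (a b : R) (y : 'rV[R]_n) k t :
  in_box a b y -> a <= t <= b -> in_box a b (upd y k t).
Proof. move=> hy ht i; rewrite !mxE; case: (i == k) => //. Qed.
Lemma to_vertex (R : realType) n m (W : 'M[R]_(n, m)) (u : 'rV[R]_n) (a b : R) :
  a <= b -> forall y, in_box a b y -> exists y', [/\ in_box a b y',
    (forall i, y' 0 i = a \/ y' 0 i = b) & gain W u y <= gain W u y'].
Proof.
move=> hab.
suff H : forall k y, in_box a b y -> exists y', [/\ in_box a b y',
    (forall i : 'I_n, (i < k)%N -> y' 0 i = a \/ y' 0 i = b) & gain W u y <= gain W u y'].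
  move=> y hy; have [y' [h1 h2 h3]] := H n y hy.
  by exists y'; split => // i; apply: h2; apply: ltn_ord.
elim=> [|k IH] y hy.
  by exists y; split.
have [y' [h1 h2 h3]] := IH y hy.
case: (ltnP k n) => hk; last first.
  exists y'; split => // i hi; apply: h2.
  by apply: leq_trans (ltn_ord i) hk.
set k' : 'I_n := Ordinal hk.
have hab' : a <= a <= b by rewrite lexx hab.
have hbb : a <= b <= b by rewrite lexx hab.
have fix1 : forall t, t = a \/ t = b -> forall i : 'I_n, (i < k.+1)%N ->
    (upd y' k' t) 0 i = a \/ (upd y' k' t) 0 i = b.
  move=> t ht i hi; rewrite !mxE; case: eqP => // hik; apply: h2.
  rewrite ltnS leq_eqVlt in hi; case/orP: hi => // /eqP hi.
  by exfalso; apply: hik; apply: val_inj; rewrite /= hi.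
have := step W u y' k' (h1 k'); rewrite upd_id => -[hs|hs].
  exists (upd y' k' a); split; first exact: upd_box.
    by apply: fix1; left.
  exact: le_trans hs.
exists (upd y' k' b); split; first exact: upd_box.
  by apply: fix1; right.
exact: le_trans hs.
Qed.
Local Open Scope classical_set_scope.
Lemma X_pos (R : realType) m (dx : 'cV[R]_m) : dx != 0 -> 0 < \sum_j (dx j 0)^+2.
Proof.
move=> hdx; have X0 : 0 <= \sum_j (dx j 0)^+2 by apply: sumr_ge0 => j _; apply: sqr_ge0.
rewrite lt_def X0 andbT; apply/negP => /eqP H; move/negP: hdx; apply; apply/eqP.
apply/colP => j; rewrite mxE; apply/eqP; rewrite -sqrf_eq0; apply/eqP.
exact: (psumr_eq0P (fun i _ => sqr_ge0 (dx i 0)) H).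
Qed.
Lemma udot (R : realType) n m (W : 'M[R]_(n, m)) (u y : 'rV[R]_n) (dx : 'cV[R]_m) (ds : 'cV[R]_n) :
  (forall i, ds i 0 = y 0 i * (W *m dx) i 0) ->
  (u *m ds) 0 0 = \sum_j vv W u y j * dx j 0.
Proof.
move=> hds; rewrite mxE.
under eq_bigr => i _ do rewrite hds mxE mulr_sumr mulr_sumr.
rewrite exchange_big /=; apply: eq_bigr => j _; rewrite /vv mulr_suml.
by apply: eq_bigr => i _; ring.
Qed.
Lemma adm_of_y (R : realType) n m (W : 'M[R]_(n, m)) (a b : R) (y : 'rV[R]_n) (dx : 'cV[R]_m) :
  in_box a b y -> dx != 0 -> admissible W a b dx (\col_i (y 0 i * (W *m dx) i 0)).
Proof.
move=> hy hdx; split => // i /=; rewrite quad_pair2 mxE.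
have /andP[h1 h2] := hy i; set z := (W *m dx) i 0; set t := y 0 i.
have -> : - 2 * (t * z - a * z) * (t * z - b * z) = 2 * (z * z) * ((t - a) * (b - t)) by ring.
apply: mulr_ge0; first by apply: mulr_ge0 => //; rewrite -expr2 sqr_ge0.
by apply: mulr_ge0; rewrite subr_ge0.
Qed.
Lemma ratio_le (R : realType) m (P : R) (dx : 'cV[R]_m) V :
  dx != 0 -> P^+2 <= V * \sum_j (dx j 0)^+2 -> P ^+ 2 / (dx^T *m dx) 0 0 <= V.
Proof. move=> hdx h; rewrite dot_sum ler_pdivrMr //; exact: X_pos. Qed.
Lemma ratio_ge0 (R : realType) m (P : R) (dx : 'cV[R]_m) : 0 <= P ^+ 2 / (dx^T *m dx) 0 0.
Proof. rewrite dot_sum; apply: divr_ge0; first exact: sqr_ge0. by apply: sumr_ge0 => j _; apply: sqr_ge0. Qed.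
Lemma y_of_adm (R : realType) n m (W : 'M[R]_(n, m)) (a b : R) (dx : 'cV[R]_m) (ds : 'cV[R]_n) :
  a <= b -> admissible W a b dx ds -> exists y : 'rV[R]_n,
    in_box a b y /\ forall i, ds i 0 = y 0 i * (W *m dx) i 0.
Proof.
move=> hab [hdx hadm].
pose yf i := if (W *m dx) i 0 == 0 then a else ds i 0 / (W *m dx) i 0.
exists (\row_i yf i).
suff H : forall i, a <= yf i <= b /\ ds i 0 = yf i * (W *m dx) i 0.
  by split => i; rewrite mxE; case: (H i).
move=> i; have := hadm i; rewrite /= quad_pair2 /yf.
set z := (W *m dx) i 0; set s := ds i 0.
case: eqP => [z0|/eqP zn0] h.
  rewrite z0 !mulr0 !subr0 in h; split; first by rewrite lexx hab.
  rewrite z0 mulr0; nra.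
have hs : s = s / z * z by rewrite divfK.
split; last by [].
set t := s / z; rewrite hs -/t in h.
have E : - 2 * (t * z - a * z) * (t * z - b * z) = - 2 * (z * z) * ((t - a) * (t - b)) by ring.
rewrite E in h.
have zz : 0 < z * z by rewrite -expr2 exprn_even_gt0.
have h' : (t - a) * (t - b) <= 0.
  nra.
apply/andP; split; nra.
Qed.
Lemma ex_max (R : realType) (T : finType) (t0 : T) (f : T -> R) : exists x, forall y, f y <= f x.
Proof.
case: (@arg_maxP _ R T t0 xpredT f isT) => x _ H. by exists x => y; apply: H.
Qed.
Theorem mainTheorem7 (R : realType) (n m : nat) (hm : (0 < m)%N)
    (W : 'M[R]_(n, m)) (u : 'rV[R]_n) (a b : R) (hab : a <= b) :
  exists y0 : 'rV[R]_n,
    [/\ in_box a b y0,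
        (forall y, in_box a b y -> gain W u y <= gain W u y0),
        ubound (ratio_set W u a b) (gain W u y0)
      & (forall M, ubound (ratio_set W u a b) M -> gain W u y0 <= M)].
Proof.
pose vert (f : {ffun 'I_n -> bool}) : 'rV[R]_n := \row_i (if f i then b else a).
have [f0 hf0] := ex_max [ffun=> false] (fun f => gain W u (vert f)).
have box0 : in_box a b (vert f0).
  by move=> i; rewrite mxE; case: (f0 i); rewrite lexx hab.
have hmax : forall y, in_box a b y -> gain W u y <= gain W u (vert f0).
  move=> y hy; have [y' [h1 h2 h3]] := to_vertex W u hab hy.
  have E : y' = vert [ffun i => y' 0 i == b].
    apply/rowP => i; rewrite !mxE ffunE; case: eqP => // hne.
    by case: (h2 i).
  rewrite E in h3.
  exact: le_trans h3 (hf0 _).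
have hub : ubound (ratio_set W u a b) (gain W u (vert f0)).
  move=> r [dx [ds [hadm ->]]].
  have [y [hy hds]] := y_of_adm hab hadm.
  rewrite (udot u hds); apply: (@le_trans _ _ (gain W u y)); last exact: hmax.
  apply: ratio_le; first by case: hadm.
  rewrite gain_sum; exact: CS.
exists (vert f0); split => // M hM.
set y0 := vert f0.
have g0 : 0 <= gain W u y0 by rewrite gain_sum; apply: sumr_ge0 => j _; apply: sqr_ge0.
pose v0 : 'cV[R]_m := \col_j vv W u y0 j.
have hv0 : forall j, v0 j 0 = vv W u y0 j by move=> j; rewrite mxE.
have Vv : gain W u y0 = \sum_j (v0 j 0)^+2.
  by rewrite gain_sum; apply: eq_bigr => j _; rewrite hv0.
case: (eqVneq v0 0) => hv.
  have gz : gain W u y0 = 0 by rewrite Vv big1 // => j _; rewrite hv mxE expr0n.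
  have c1 : const_mx 1 != 0 :> 'cV[R]_m.
    apply/negP => /eqP /colP /(_ (Ordinal hm)); rewrite !mxE => /eqP; by rewrite oner_eq0.
  have ha : in_box a b (const_mx a : 'rV[R]_n) by move=> i; rewrite mxE lexx hab.
  pose dx1 : 'cV[R]_m := const_mx 1.
  pose ds1 : 'cV[R]_n := \col_i ((const_mx a : 'rV[R]_n) 0 i * (W *m dx1) i 0).
  rewrite gz; apply: le_trans (ratio_ge0 ((u *m ds1) 0 0) dx1) _.
  apply: hM; exists dx1, ds1.
  by split => //; exact: adm_of_y.
apply: hM; exists v0, (\col_i (y0 0 i * (W *m v0) i 0)); split; first exact: adm_of_y.
rewrite (@udot _ _ _ W u y0 v0); last by move=> i; rewrite mxE.
have -> : \sum_j vv W u y0 j * v0 j 0 = gain W u y0.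
  by rewrite Vv; apply: eq_bigr => j _; rewrite hv0 expr2.
rewrite dot_sum -Vv.
have gp : 0 < gain W u y0 by rewrite Vv; exact: X_pos.
by rewrite expr2 mulfK // gt_eqF.
Qed.
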